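(* Let $G$ be a graph with $V(G)=\{v_1,\dots,v_n\}$, let $m\in\mathbb{N}$, let $d_1,\dots,d_n$ be nonnegative integers, and let $L$ be a list assignment for $G$ with $|L(v_i)|=m+d_i$ for each $i\in[n]$. Then \[P(G,L)\ge\left\lceil\frac{P_\ell(G,m)\prod_{i=1}^n(m+d_i)}{m^n}\right\rceil.\]
   Context: For a list assignment $L$ (a set $L(v)$ of colors for each vertex $v$), $P(G,L)$ is the number of proper colorings $f$ of $G$ with $f(v)\in L(v)$ for all $v$. An $m$-assignment has $|L(v)|=m$ for all $v$, and the list color function $P_\ell(G,m)$ is the minimum of $P(G,L)$ over all $m$-assignments $L$ for $G$. *)

(* Defs.v *)
From Stdlib Require Import ClassicalEpsilon.
From HB Require Import structures.
From mathcomp Require Import all_boot all_order all_algebra.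
From mathcomp Require Import finmap.
Set Implicit Arguments. Unset Strict Implicit. Unset Printing Implicit Defensive.
Import Order.TTheory GRing.Theory Num.Theory.
Local Open Scope fset_scope.

(* A simple graph on the finite vertex type T is a symmetric irreflexive
   relation g : rel T (the hypotheses are stated in the theorem). *)
Definition list_assignment (T : finType) := T -> {fset nat}.

Definition is_massign (T : finType) (L : list_assignment T) (m : nat) : Prop :=
  forall v, #|` L v| = m.

Definition colour_bound (T : finType) (L : list_assignment T) : nat :=
  \max_(v : T) \max_(c <- L v) c.+1.

(* proper L-colourings of g, with colours represented in 'I_(colour_bound L)
   (no loss: every admissible colour is < colour_bound L). *)
Definition proper_Lcolouring (T : finType) (g : rel T) (L : list_assignment T)
  (f : {ffun T -> 'I_(colour_bound L)}) : bool :=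
  [forall v, nat_of_ord (f v) \in L v] &&
  [forall u, forall v, g u v ==> (f u != f v)].
Arguments proper_Lcolouring {T} g L f.

Arguments colour_bound {T} L.
Definition P (T : finType) (g : rel T) (L : list_assignment T) : nat :=
  #|[set f : {ffun T -> 'I_(colour_bound L)} | proper_Lcolouring g L f]|.

Definition Pl_pred (T : finType) (g : rel T) (m : nat) : pred nat :=
  fun k => if excluded_middle_informative
                (exists L : list_assignment T, is_massign L m /\ P g L = k)
           then true else false.

Lemma Pl_pred_ex (T : finType) (g : rel T) (m : nat) :
  exists k, Pl_pred g m k.
Proof.
pose L : list_assignment T := fun _ => [fset i | i in iota 0 m].
exists (P g L); rewrite /Pl_pred.
case: excluded_middle_informative => // [[]]; exists L; split => // v.
by rewrite /L card_imfset //= undup_id ?iota_uniq // size_iota.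
Qed.

Definition Pl (T : finType) (g : rel T) (m : nat) : nat :=
  ex_minn (Pl_pred_ex g m).

(* Main.v *)
Require Import Defs.
From HB Require Import structures.
From mathcomp Require Import all_boot all_order all_algebra.
From mathcomp Require Import finmap.
Import Order.TTheory GRing.Theory Num.Theory.
Set Implicit Arguments. Unset Strict Implicit.
Local Open Scope fset_scope.

Definition propN (T : finType) (g : rel T) (L : list_assignment T) N
  (f : {ffun T -> 'I_N}) : bool :=
  [forall v, nat_of_ord (f v) \in L v] && [forall u, forall v, g u v ==> (f u != f v)].

Lemma cb_lt (T : finType) (L : list_assignment T) v c :
  c \in L v -> c < colour_bound L.
Proof.
move=> cL; rewrite /colour_bound.
apply: leq_trans (leq_bigmax v).
exact: (@leq_bigmax_seq nat (enum_fset (L v)) predT succn c cL isT).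
Qed.

Lemma P_N (T : finType) (g : rel T) (L : list_assignment T) N :
  (forall v c, c \in L v -> c < N) ->
  P g L = #|[set f : {ffun T -> 'I_N} | propN g L f]|.
Proof.
move=> HN.
have hBN : colour_bound L <= N.
  apply/bigmax_leqP => v _; apply/bigmax_leqP_seq => c cL _; exact: HN cL.
pose W (f : {ffun T -> 'I_(colour_bound L)}) : {ffun T -> 'I_N} :=
  [ffun v => widen_ord hBN (f v)].
have Winj : injective W.
  move=> f1 f2 /ffunP E; apply/ffunP => v; move: (E v); rewrite !ffunE.
  by move/(congr1 val) => /= h; apply: val_inj.
rewrite /P -(card_imset _ Winj); apply: eq_card => f; rewrite [in RHS]inE.
apply/imsetP/idP.
- case=> f'; rewrite inE => /andP [/forallP h1 /forallP h2] ->.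
  idtac.
  apply/andP; split; apply/forallP => u; rewrite ?ffunE /=; first exact: h1.
  apply/forallP => v; apply/implyP => guv; rewrite !ffunE.
  move: (h2 u) => /forallP /(_ v) /implyP /(_ guv).
  by apply: contra => /eqP h; apply/eqP/val_inj; move/(congr1 val): h.
- case/andP => /forallP h1 /forallP h2.
  have hv : forall v, f v < colour_bound L by move=> v; exact: cb_lt (h1 v).
  exists [ffun v => Ordinal (hv v)].
    rewrite inE; apply/andP; split; apply/forallP => u; rewrite ?ffunE /=; first exact: h1.
    apply/forallP => v; apply/implyP => guv; rewrite !ffunE.
    move: (h2 u) => /forallP /(_ v) /implyP /(_ guv).
    by apply: contra => /eqP h; apply/eqP/val_inj; move/(congr1 val): h.
  by apply/ffunP => v; rewrite !ffunE; apply: val_inj.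
Qed.

Definition Lc (T : finType) (L : list_assignment T) v (c : nat) : list_assignment T :=
  fun u => if u == v then L v `\ c else L u.

Lemma inner_sum (s : seq nat) x : uniq s -> x \in s ->
  \sum_(c <- s) (x != c : nat) = (size s).-1.
Proof.
move=> us xs.
have -> : \sum_(c <- s) (x != c : nat) = count (fun c => x != c) s.
  by elim: s {us xs} => [|a s IH]; rewrite ?big_nil ?big_cons //= IH.
have := count_predC (pred1 x) s.
rewrite count_uniq_mem // xs.
have -> : count (predC (pred1 x)) s = count (fun c => x != c) s.
  by apply: eq_count => c /=; rewrite eq_sym.
by move=> <-.
Qed.

Lemma count_step (T : finType) (g : rel T) (L : list_assignment T) v N :
  \sum_(c <- enum_fset (L v)) #|[set f : {ffun T -> 'I_N} | propN g (Lc L v c) f]|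
  = #|[set f : {ffun T -> 'I_N} | propN g L f]| * (#|` L v| - 1).
Proof.
have E : forall c, c \in L v -> #|[set f : {ffun T -> 'I_N} | propN g (Lc L v c) f]|
   = \sum_(f in [set f : {ffun T -> 'I_N} | propN g L f]) (nat_of_ord (f v) != c : nat).
  move=> c cL; rewrite -sum1_card big_mkcond [RHS]big_mkcond /=.
  apply: eq_bigr => f _; rewrite !inE /propN.
  have -> : [forall v0, nat_of_ord (f v0) \in Lc L v c v0] =
            [forall v0, nat_of_ord (f v0) \in L v0] && (nat_of_ord (f v) != c).
    apply/forallP/andP.
    - move=> h; split; last by move: (h v); rewrite /Lc eqxx in_fsetD1 => /andP[].
      apply/forallP => u; move: (h u); rewrite /Lc; case: eqP => [->|//].
      by rewrite in_fsetD1 => /andP[].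
    - case=> /forallP h hv u; rewrite /Lc; case: eqP => [->|_]; [by rewrite in_fsetD1 h andbT | exact: (h u)].
  by case: [forall v0, _]; case: (nat_of_ord (f v) != c); case: [forall u, _].
rewrite big_seq (eq_bigr _ E) -big_seq exchange_big /=.
rewrite -sum_nat_const; apply: eq_bigr => f; rewrite inE => /andP[/forallP h _].
rewrite inner_sum ?fset_uniq //; first by rewrite subn1.
Qed.

Local Close Scope fset_scope.
From mathcomp Require Import ring.
From Stdlib Require Import ClassicalEpsilon.

Lemma Pl_le (T : finType) (g : rel T) m (L : list_assignment T) :
  is_massign L m -> Pl g m <= P g L.
Proof.
move=> HL; rewrite /Pl; case: ex_minnP => k _ /(_ (P g L)); apply.
rewrite /Pl_pred; case: excluded_middle_informative => // [[]].
by exists L.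
Qed.

Lemma base (T : finType) (g : rel T) m (d : T -> nat) (L : list_assignment T) :
  (forall v, d v = 0) -> (forall v, #|` L v|%fset = m + d v) ->
  Pl g m * \prod_(v : T) (m + d v) <= P g L * m ^ #|T|.
Proof.
move=> d0 HL.
rewrite (eq_bigr (fun _ => m)); last by move=> v _; rewrite d0 addn0.
rewrite prod_nat_const cardT -cardE leq_mul2r Pl_le ?orbT // => v.
by rewrite HL d0 addn0.
Qed.

Lemma sum_const_seq (s : seq nat) K : \sum_(c <- s) K = size s * K.
Proof. by elim: s => [|a s IH]; rewrite ?big_nil ?big_cons //= IH mulSn. Qed.

Lemma key (T : finType) (g : rel T) m : 0 < m -> forall n (d : T -> nat) (L : list_assignment T),
  \sum_v d v = n -> (forall v, #|` L v|%fset = m + d v) ->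
  Pl g m * \prod_(v : T) (m + d v) <= P g L * m ^ #|T|.
Proof.
move=> m0; elim=> [|n IH] d L Hs HL.
  apply: base HL => v; apply/eqP; move/eqP: Hs; rewrite sum_nat_eq0.
  by move/forallP/(_ v).
have [v dv] : exists v, 0 < d v.
  apply/existsP; apply: contraT; rewrite negb_exists => /forallP h.
  move: Hs; rewrite big1 => [//|v _]; by move: (h v); rewrite lt0n negbK => /eqP.
pose d' u := if u == v then (d v).-1 else d u.
pose k := m + d v.
have Hs' : \sum_u d' u = n.
  move: Hs; rewrite [\sum_u d u](bigD1 v) // [\sum_u d' u](bigD1 v) //= /d' eqxx.
  rewrite [X in _ -> _ + X = _](eq_bigr d); last by move=> u /negbTE ->.
  by rewrite -(prednK dv) addSn => -[].
pose N0 := colour_bound L.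
have HN0 : forall c, (forall u x, x \in Lc L v c u -> x < N0).
  move=> c u x; rewrite /Lc; case: eqP => _; last exact: cb_lt.
  by rewrite in_fsetD1 => /andP[_]; apply: cb_lt.
have IHc : forall c, c \in L v ->
    Pl g m * \prod_(u : T) (m + d' u) <= P g (Lc L v c) * m ^ #|T|.
  move=> c cL; apply: IH Hs' _ => u; rewrite /Lc /d'; case: eqP => [_|_]; last exact: HL.
  move: ((cardfsD1 c (L v))%fset); rewrite cL HL add1n -(prednK dv) addnS => -[<-].
  by [].
have Hsum : size (enum_fset (L v)) * (Pl g m * \prod_(u : T) (m + d' u))
    <= (P g L * (#|` L v|%fset - 1)) * m ^ #|T|.
  rewrite -sum_const_seq (P_N g (cb_lt (L:=L))) -count_step big_distrl /=.
  rewrite big_seq [X in _ <= X]big_seq; apply: leq_sum => c cL.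
  by rewrite -(P_N g (HN0 c)); apply: IHc.
have Ek : size (enum_fset (L v)) = k by rewrite /k -HL.
rewrite Ek in Hsum.
have pR : \prod_(u : T) (m + d' u) = (k - 1) * \prod_(u | u != v) (m + d u).
  rewrite (bigD1 v) //= /d' eqxx; congr (_ * _); last first.
    by apply: eq_bigr => u /negbTE ->.
  by rewrite /k subn1 -(prednK dv) addnS.
have pQ : \prod_(u : T) (m + d u) = k * \prod_(u | u != v) (m + d u).
  by rewrite (bigD1 v).
have k1 : 0 < k - 1 by rewrite /k subn1 -(prednK dv) addnS /= ltn_addr.
rewrite -(leq_pmul2r k1) pQ.
move: Hsum; rewrite pR.
set R := \prod_(u | u != v) _.
set A := Pl g m. set B := P g L. set M := m ^ #|T|.
have -> : A * (k * R) * (k - 1) = k * (A * ((k - 1) * R)) by ring.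
have -> : B * M * (k - 1) = B * (k - 1) * M by ring.
by [].
Qed.

Unset Implicit Arguments. Set Strict Implicit.
Local Open Scope ring_scope.

Lemma fin (a b p : nat) : (a <= p * b)%N -> (0 < b)%N ->
  (Num.ceil ((a%:R / b%:R) : rat) <= p%:Z)%R.
Proof.
move=> h b0; rewrite ceil_le_int ler_pdivrMr ?ltr0n //.
have -> : ((p%:Z)%:~R : rat) = p%:R by [].
by rewrite -natrM ler_nat.
Qed.

Theorem lemma25 (T : finType) (g : rel T)
  (g_sym : symmetric g) (g_irr : irreflexive g)
  (m : nat) (d : T -> nat) (L : list_assignment T)
  (HL : forall v, #|` L v|%fset = (m + d v)%N) :
  (Num.ceil (((Pl g m * \prod_(v : T) (m + d v))%N)%:R
              / ((m ^ #|T|)%N)%:R : rat) <= (P g L)%:Z)%R.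
Proof.
case: (posnP m) => [m0|mpos].
  case: (posnP #|T|) => [T0|Tpos].
    apply: fin; last by rewrite T0.
    apply: base HL => v; exfalso.
    have : (0 < #|T|)%N by apply/card_gt0P; exists v.
    by rewrite T0.
  rewrite m0 exp0n // invr0 mulr0 ceil0 //.
apply: fin; last by rewrite expn_gt0 mpos.
exact: key mpos _ _ _ erefl HL.
Qed.
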